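(* Let $G$ be a digraph on $n$ vertices and let $\mathcal{P}=\{V_{ij}:i,j\in[2]\}$ be a $4$-partition of $V(G)$ with $|V_{12}|=|V_{21}|>0$. Suppose that for every $i\in[2]$ and every proper $i$-pair $\phi^i$ with respect to $\mathcal{P}$, the digraph $\mathcal{J}^i(\mathcal{P},G,\phi^i)$ contains a Hamilton cycle. Then $G$ contains a Hamilton cycle.
   Context: A $4$-partition of $V(G)$ is a family $\{V_{ij}:i,j\in[2]\}$ of pairwise disjoint (possibly empty) sets with union $V(G)$; $V_{i*}=V_{i1}\cup V_{i2}$, $V_{*i}=V_{1i}\cup V_{2i}$. Let $t=|V_{12}|=|V_{21}|$ and treat $[t]=\{1,\dots,t\}$ as a set disjoint from $V(G)$. For $i\in[2]$, a proper $i$-pair with respect to $\mathcal{P}$ is a pair $\phi^i=(\phi_{i*},\phi_{*i})$ of bijections $\phi_{i*}:[t]\cup V_{ii}\to V_{i*}$ and $\phi_{*i}:[t]\cup V_{ii}\to V_{*i}$ with $\phi_{i*}(x)=\phi_{*i}(x)=x$ for all $x\in V_{ii}$. The digraph $\mathcal{J}^i(\mathcal{P},G,\phi^i)$ has vertex set $[t]\cup V_{ii}$, and for $a,b$ in this set, $ab$ is an edge (a loop if $a=b$) iff $\phi_{i*}(a)\phi_{*i}(b)\in E(G)$. A Hamilton cycle is a directed cycle through all vertices (loops play no role). *)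

(* Defs.v *)
From mathcomp Require Import all_boot.
Set Implicit Arguments. Unset Strict Implicit. Unset Printing Implicit Defensive.

(* the two indices of [2]: idx1 = 1, idx2 = 2 *)
Definition idx1 : 'I_2 := @Ordinal 2 0 isT.
Definition idx2 : 'I_2 := @Ordinal 2 1 isT.

Section Defs.
Variable V : finType.

Definition four_partition (P : 'I_2 -> 'I_2 -> {set V}) : Prop :=
  (forall i j k l : 'I_2, (i, j) != (k, l) -> [disjoint P i j & P k l]) /\
  (forall x : V, exists i j, x \in P i j).

Definition Vrow (P : 'I_2 -> 'I_2 -> {set V}) (i : 'I_2) : {set V} :=
  P i idx1 :|: P i idx2.
Definition Vcol (P : 'I_2 -> 'I_2 -> {set V}) (i : 'I_2) : {set V} :=
  P idx1 i :|: P idx2 i.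

(* The vertex set [t] \cup A, with [t] a copy disjoint from V. *)
Definition Jdom (t : nat) (A : {set V}) : finType :=
  ('I_t + {x : V | x \in A})%type.

Definition bij_onto (D : finType) (f : D -> V) (B : {set V}) : Prop :=
  [/\ injective f, forall u, f u \in B & forall x, x \in B -> exists u, f u = x].

Definition proper_pair (P : 'I_2 -> 'I_2 -> {set V}) (i : 'I_2)
    (f g : Jdom #|P idx1 idx2| (P i i) -> V) : Prop :=
  [/\ bij_onto f (Vrow P i), bij_onto g (Vcol P i)
    & forall x : {x : V | x \in P i i}, f (inr x) = val x /\ g (inr x) = val x].

Definition Jrel (E : rel V) (D : finType) (f g : D -> V) : rel D :=
  fun a b => E (f a) (g b).
End Defs.

Arguments proper_pair {V} P i f g.
Arguments Jrel {V} E {D} f g.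
Arguments bij_onto {V D} f B.

Definition hamiltonian (T : finType) (e : rel T) : Prop :=
  exists s : seq T, [/\ uniq s, forall x, x \in s & cycle e s].

(* Main.v *)
Require Import Defs.
From mathcomp Require Import all_boot zify.
Set Implicit Arguments. Unset Strict Implicit. Unset Printing Implicit Defensive.

Definition sumf (V : finType) (t : nat) (A : {set V}) (h : 'I_t -> V)
  (d : Jdom t A) : V := match d with inl k => h k | inr x => val x end.

Lemma bij_sum (V : finType) (t : nat) (A B : {set V}) (h : 'I_t -> V) :
  injective h -> (forall k, h k \in B) -> #|B| = t -> [disjoint A & B] ->
  bij_onto (@sumf V t A h) (B :|: A).
Proof.
move=> hi hB cB dAB; split.
- move=> [k|x] [k'|x'] /=.
  + by move/hi=> ->.
  + move=> e; have := hB k; rewrite e => H.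
    by have := disjointFr dAB (valP x'); rewrite H.
  + move=> e; have := hB k'; rewrite -e => H.
    by have := disjointFr dAB (valP x); rewrite H.
  + by move/val_inj=> ->.
- by move=> [k|x] /=; rewrite in_setU ?hB ?(valP x) ?orbT.
- move=> x; rewrite in_setU => /orP [xB|xA].
  + have eqB : [set h k | k in 'I_t] = B.
      apply/eqP; rewrite eqEcard card_imset // card_ord cB leqnn andbT.
      by apply/subsetP=> y /imsetP [k _ ->].
    by move: xB; rewrite -eqB => /imsetP [k _ ->]; exists (inl k).
  + by exists (inr (exist _ x xA)).
Qed.

Lemma ham_succ (T : finType) (e : rel T) : hamiltonian e ->
  exists n : T -> T, [/\ injective n, forall x, e x (n x) & forall x y, fconnect n x y].
Proof.
move=> [s [us alls cs]]; exists (next s); split.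
- exact: can_inj (prev_next us).
- by move=> x; apply: next_cycle.
- by move=> x y; rewrite (fconnect_cycle (cycle_next us) (alls x)).
Qed.

Lemma succ_ham (T : finType) (e : rel T) (n : T -> T) (c : T) :
  (forall x, e x (n x)) -> (forall y, fconnect n c y) -> fconnect n (n c) c ->
  hamiltonian e.
Proof.
move=> he hc hcc; exists (orbit n c); split.
- exact: orbit_uniq.
- by move=> x; rewrite -fconnect_orbit.
- have := hcc; rewrite fconnect_f => hf.
  by apply: (sub_cycle _ hf) => x y /eqP <-.
Qed.

Lemma chain (T U : finType) (n1 : T -> T) (nG : U -> U) (f : T -> U) :
  (forall a, fconnect nG (f a) (f (n1 a))) ->
  forall a b, fconnect n1 a b -> fconnect nG (f a) (f b).
Proof.
move=> st a b /iter_findex <-; elim: (findex _ _ _) => [|i IH] /=.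
  exact: connect0.
exact: connect_trans IH (st _).
Qed.

Lemma I2_cases (i : 'I_2) : i = idx1 \/ i = idx2.
Proof. case: i => [[|[|m]] Hm]; [left|right|by []]; exact: val_inj. Qed.

Unset Implicit Arguments.
Theorem proposition5p1 (V : finType) (E : rel V) (P : 'I_2 -> 'I_2 -> {set V}) :
  four_partition P ->
  #|P idx1 idx2| = #|P idx2 idx1| ->
  0 < #|P idx1 idx2| ->
  (forall (i : 'I_2) (f g : Jdom #|P idx1 idx2| (P i i) -> V),
      proper_pair P i f g -> hamiltonian (Jrel E f g)) ->
  hamiltonian E.
Proof.
move=> [Hdisj Hcov] Ht Ht0 Hham.
set t := #|P idx1 idx2| in Ht Ht0 Hham.
have Hd : forall i j k l x, x \in P i j -> x \in P k l -> (i, j) = (k, l).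
  move=> i j k l x h1 h2; apply/eqP; apply: contraT => ne.
  by have := disjointFr (Hdisj _ _ _ _ ne) h1; rewrite h2.
have i12 : idx1 != idx2 by [].
pose alpha (k : 'I_t) : V := enum_val (cast_ord Ht k).
pose beta (k : 'I_t) : V := enum_val k.
have alphaP k : alpha k \in P idx2 idx1 by apply: enum_valP.
have betaP k : beta k \in P idx1 idx2 by apply: enum_valP.
have alpha_inj : injective alpha.
  by move=> k k' /enum_val_inj /(congr1 val) /= e; apply/val_inj.
have beta_inj : injective beta by move=> k k' /enum_val_inj.
have dis12 : [disjoint P idx2 idx2 & P idx1 idx2].
  rewrite -setI_eq0; apply/eqP/setP=> x; rewrite !inE.
  by apply/negP=> /andP [h1 h2]; have := Hd _ _ _ _ _ h1 h2.
have dis21 : [disjoint P idx2 idx2 & P idx2 idx1].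
  rewrite -setI_eq0; apply/eqP/setP=> x; rewrite !inE.
  by apply/negP=> /andP [h1 h2]; have := Hd _ _ _ _ _ h1 h2.
have dis11a : [disjoint P idx1 idx1 & P idx1 idx2].
  rewrite -setI_eq0; apply/eqP/setP=> x; rewrite !inE.
  by apply/negP=> /andP [h1 h2]; have := Hd _ _ _ _ _ h1 h2.
have dis11b : [disjoint P idx1 idx1 & P idx2 idx1].
  rewrite -setI_eq0; apply/eqP/setP=> x; rewrite !inE.
  by apply/negP=> /andP [h1 h2]; have := Hd _ _ _ _ _ h1 h2.
pose f2 := @sumf V t (P idx2 idx2) alpha.
pose g2 := @sumf V t (P idx2 idx2) beta.
have pp2 : proper_pair P idx2 f2 g2.
  split=> //.
  - by rewrite /Vrow; apply: bij_sum => //; rewrite -Ht.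
  - by rewrite /Vcol; apply: bij_sum.
have [n2 [n2_inj n2E n2C]] := ham_succ (Hham _ _ _ pp2).
pose isinl (d : Jdom t (P idx2 idx2)) := if d is inl _ then true else false.
have exm : forall k : 'I_t, exists i, (0 < i) && isinl (iter i n2 (inl k)).
  move=> k; exists (findex n2 (n2 (inl k)) (inl k)).+1.
  by rewrite iterSr iter_findex.
pose m k := ex_minn (exm k).
have mP k : (0 < m k) && isinl (iter (m k) n2 (inl k)).
  by rewrite /m; case: ex_minnP.
have mmin k i : (0 < i) && isinl (iter i n2 (inl k)) -> m k <= i.
  by rewrite /m; case: ex_minnP => ? ? H /H.
have iter_inj : forall (T : Type) (f : T -> T) i, injective f -> injective (iter i f).
  by move=> T f; elim=> [|i IH] fi x y //= /fi /(IH fi).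
pose h1 k := g2 (iter (m k) n2 (inl k)).
have h1P k : h1 k \in P idx1 idx2.
  rewrite /h1; have := mP k; case: (iter _ _ _) => [j|w] /andP [_] //= _.
have h1_inj : injective h1.
  have key : forall k k', m k <= m k' -> h1 k = h1 k' -> k = k'.
    move=> k k' le; rewrite /h1.
    have := mP k; have := mP k'.
    case e1: (iter (m k') n2 (inl k')) => [j'|w'] /andP [p' _] //.
    case e2: (iter (m k) n2 (inl k)) => [j|w] /andP [p _] //= /beta_inj ej.
    move: e1 e2; rewrite ej -(subnK le) addnC iterD => e1 e2.
    rewrite -e2 in e1; have {}e1 := iter_inj _ _ (m k) n2_inj _ _ e1.
    case: (posnP (m k' - m k)) => [z|pos].
      by move: e1; rewrite z /= => [[]].
    have := mmin k' (m k' - m k); rewrite pos e1 /= => /(_ isT) H.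
    exfalso; lia.
  move=> k k' e; case: (leqP (m k) (m k')) => le; first exact: key.
  by apply/esym/key => //; apply: ltnW.
pose f1 := @sumf V t (P idx1 idx1) h1.
pose g1 := @sumf V t (P idx1 idx1) alpha.
have pp1 : proper_pair P idx1 f1 g1.
  split=> //.
  - by rewrite /Vrow setUC; apply: bij_sum.
  - by rewrite /Vcol setUC; apply: bij_sum => //; rewrite -Ht.
have [n1 [n1_inj n1E n1C]] := ham_succ (Hham _ _ _ pp1).
have [f1i f1in f1s] := (match pp1 with And3 a _ _ => a end).
have [g1i g1in g1s] := (match pp1 with And3 _ a _ => a end).
have [f2i f2in f2s] := (match pp2 with And3 a _ _ => a end).
have [g2i g2in g2s] := (match pp2 with And3 _ a _ => a end).
have rowdis : forall d d', f1 d <> f2 d'.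
  move=> d d' e; have := f1in d; have := f2in d'; rewrite /Vrow -e !inE.
  by case/orP=> q1; case/orP=> q2; have := Hd _ _ _ _ _ q1 q2.
have coldis : forall d d', g1 d <> g2 d'.
  move=> d d' e; have := g1in d; have := g2in d'; rewrite /Vcol -e !inE.
  by case/orP=> q1; case/orP=> q2; have := Hd _ _ _ _ _ q1 q2.
pose nG u := if [pick d | f1 d == u] is Some d then g1 (n1 d)
             else if [pick d | f2 d == u] is Some d then g2 (n2 d) else u.
have nG1 d : nG (f1 d) = g1 (n1 d).
  rewrite /nG; case: pickP => [d' /eqP /f1i -> //|H].
  by have := H d; rewrite eqxx.
have nG2 d : nG (f2 d) = g2 (n2 d).
  rewrite /nG; case: pickP => [d' /eqP /rowdis //|_].
  case: pickP => [d' /eqP /f2i -> //|H].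
  by have := H d; rewrite eqxx.
have edges u : E u (nG u).
  have [i [j uij]] := Hcov u.
  case: (I2_cases i) => ei; subst i.
  - have [d <-] : exists d, f1 d = u.
      apply: f1s; rewrite /Vrow inE; by case: (I2_cases j) => ej; rewrite ej in uij; rewrite uij ?orbT.
    by rewrite nG1; apply: n1E.
  - have [d <-] : exists d, f2 d = u.
      apply: f2s; rewrite /Vrow inE; by case: (I2_cases j) => ej; rewrite ej in uij; rewrite uij ?orbT.
    by rewrite nG2; apply: n2E.
have fret k i : i < m k -> iter i.+1 nG (f2 (inl k)) = g2 (iter i.+1 n2 (inl k)).
  elim: i => [|i IH] lt; first exact: nG2.
  rewrite iterS [in RHS]iterS IH ?(ltn_trans _ lt) //.
  have : ~~ isinl (iter i.+1 n2 (inl k)).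
    by apply/negP=> H; have := mmin k i.+1; rewrite H /= => /(_ isT); rewrite leqNgt lt.
  case: (iter i.+1 n2 (inl k)) => [j0|w0] //= _.
  exact: (nG2 (inr w0)).
have fret2 k : fconnect nG (f2 (inl k)) (f1 (inl k)).
  have := mP k; case e: (m k) => [|i] //= _.
  have := fret k i; rewrite e ltnSn => /(_ isT) H.
  rewrite /h1 e -H; exact: fconnect_iter.
have step a : fconnect nG (nG (f1 a)) (f1 (n1 a)).
  rewrite nG1; case: (n1 a) => [k|v].
  - by rewrite -[g1 (inl k)]/(f2 (inl k)); apply: fret2.
  - exact: connect0.
have step' a : fconnect nG (f1 a) (f1 (n1 a)).
  exact: connect_trans (fconnect1 _ _) (step a).
have ch := chain step'.
pose k0 : 'I_t := Ordinal Ht0.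
pose c := f1 (inl k0).
have Cf1 a : fconnect nG c (f1 a) by apply: ch; apply: n1C.
have Cg1 d : fconnect nG c (g1 d).
  have na : n1 (iter (findex n1 (n1 d) d) n1 d) = d.
    by rewrite -iterS iterSr iter_findex.
  rewrite -na -nG1; exact: connect_trans (Cf1 _) (fconnect1 _ _).
have Cg2 b : fconnect nG c (g2 b).
  rewrite -(iter_findex (n2C (inl k0) b)).
  elim: (findex _ _ _) => [|i IH].
    have [d <-] : exists d, f1 d = g2 (inl k0).
      by apply: f1s; rewrite /Vrow inE betaP orbT.
    exact: Cf1.
  rewrite iterS; move: IH; case: (iter i n2 (inl k0)) => [j|w] IH.
  - rewrite -nG2; apply: connect_trans (Cg1 (inl j)) (fconnect1 _ _).
  - rewrite -nG2; exact: connect_trans IH (fconnect1 _ _).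
have All u : fconnect nG c u.
  have [i [j uij]] := Hcov u.
  case: (I2_cases i) => ei; subst i.
  - have [d <-] : exists d, f1 d = u.
      apply: f1s; rewrite /Vrow inE; by case: (I2_cases j) => ej; rewrite ej in uij; rewrite uij ?orbT.
    exact: Cf1.
  - case: (I2_cases j) => ej; subst j.
    + have [d <-] : exists d, g1 d = u by apply: g1s; rewrite /Vcol inE uij orbT.
      exact: Cg1.
    + have [d <-] : exists d, g2 d = u by apply: g2s; rewrite /Vcol inE uij orbT.
      exact: Cg2.
apply: (succ_ham edges All).
apply: connect_trans (step _) _; apply: ch; apply: n1C.
Qed.
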